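(* Let $A, B$ be $2n\times 2n$ real symmetric positive semidefinite matrices whose kernels are symplectic subspaces of $\mathbb{R}^{2n}$. If $A$ lies in the convex hull of the symplectic orbit of $B$, i.e. $A = \sum_{i=1}^m \lambda_i M_i^T B M_i$ for some $m\ge 1$, some $M_1,\dots,M_m\in\operatorname{Sp}(2n)$, and some $\lambda_1,\dots,\lambda_m > 0$ with $\sum_i \lambda_i = 1$, then $d(A)\prec^w d(B)$.
   Context: Let $J = \begin{bmatrix} 0 & I_n \\ -I_n & 0\end{bmatrix}$. A real $2n\times 2n$ matrix $M$ is symplectic if $M^TJM = J$; $\operatorname{Sp}(2n)$ denotes the group of such matrices. A linear subspace $W\subseteq\mathbb{R}^{2n}$ is symplectic if for every $0\neq u\in W$ there is $v\in W$ with $u^TJv\neq 0$. For a real symmetric positive semidefinite $2n\times 2n$ matrix $A$ whose kernel is a symplectic subspace, there is $M\in\operatorname{Sp}(2n)$ with $M^TAM = D\oplus D$ where $D$ is an $n\times n$ diagonal matrix with non-negative entries, unique up to permutation of its diagonal entries; these are the symplectic eigenvalues of $A$, and $d(A) = (d_1(A),\dots,d_n(A))$ denotes them in non-decreasing order. For $x\in\mathbb{R}^n$, $x^\uparrow$ denotes $x$ rearranged in non-decreasing order. For $x,y\in\mathbb{R}^n$, $x\prec^w y$ ($x$ is weakly supermajorized by $y$) means $\sum_{j=1}^k x^\uparrow_j \ge \sum_{j=1}^k y^\uparrow_j$ for all $1\le k\le n$. *)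

(* Defs.v *)
From HB Require Import structures.
From mathcomp Require Import all_boot all_order all_algebra.
From mathcomp Require Import reals.
Set Implicit Arguments. Unset Strict Implicit. Unset Printing Implicit Defensive.
Import Order.TTheory GRing.Theory Num.Theory.
Local Open Scope ring_scope.

Section Symp.
Variables (R : realType) (n : nat).

Definition Jmx : 'M[R]_(n + n) := block_mx 0 1%:M (- 1%:M) 0.

Definition symplectic (M : 'M[R]_(n + n)) : Prop := M^T *m Jmx *m M = Jmx.

Definition psd (A : 'M[R]_(n + n)) : Prop :=
  A^T = A /\ forall x : 'cV[R]_(n + n), 0 <= (x^T *m A *m x) 0 0.

Definition ker_symplectic (A : 'M[R]_(n + n)) : Prop :=
  forall u : 'cV[R]_(n + n), A *m u = 0 -> u != 0 ->
    exists2 v : 'cV[R]_(n + n), A *m v = 0 & (u^T *m Jmx *m v) 0 0 != 0.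

Definition symp_eigs (A : 'M[R]_(n + n)) (d : 'rV[R]_n) : Prop :=
  (forall i, 0 <= d 0 i) /\
  (forall i j : 'I_n, (i <= j)%N -> d 0 i <= d 0 j) /\
  exists2 M : 'M[R]_(n + n), symplectic M &
    M^T *m A *m M = block_mx (diag_mx d) 0 0 (diag_mx d).

Definition sort_up (x : 'rV[R]_n) : seq R := sort <=%R [seq x 0 i | i <- enum 'I_n].

Definition weak_supmaj (x y : 'rV[R]_n) : Prop :=
  forall k : nat, (1 <= k <= n)%N ->
    \sum_(j < k) nth 0 (sort_up y) j <= \sum_(j < k) nth 0 (sort_up x) j.

End Symp.

(* Main.v *)
Require Import Defs.
From HB Require Import structures.
From mathcomp Require Import all_boot all_order all_algebra.
From mathcomp Require Import reals.
From mathcomp Require Import lra zify ring.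
Import Order.TTheory GRing.Theory Num.Theory.
Set Implicit Arguments. Unset Strict Implicit.
Local Open Scope ring_scope.

Section Aux.
Variable R : realType.

Lemma tr_sq_ge0 p q (c : 'M[R]_(p,q)) : 0 <= \tr (c^T *m c).
Proof.
rewrite /mxtrace; apply: sumr_ge0 => i _; rewrite !mxE; apply: sumr_ge0 => j _.
by rewrite !mxE -expr2 sqr_ge0.
Qed.
Arguments tr_sq_ge0 {p q}.

Lemma mxmxT_eq0 p q (X : 'M[R]_(p,q)) : X *m X^T = 0 -> X = 0.
Proof.
move=> H; apply/matrixP => i j; have := congr1 (fun M : 'M[R]_p => M i i) H.
rewrite !mxE => H2.
have /(_ j isT) : forall k, true -> X i k * X^T k i = 0.
  apply: psumr_eq0P => // k _; by rewrite mxE -expr2 sqr_ge0.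
by rewrite mxE => /eqP; rewrite mulf_eq0 orbb => /eqP.
Qed.

Lemma proj_ex p q (Y : 'M[R]_(p,q)) : exists Pi : 'M[R]_q,
  [/\ Pi^T = Pi, Pi *m Pi = Pi, Y *m Pi = 0 & \tr Pi = q%:R - (\rank Y)%:R].
Proof.
have [Z [Zfree YZ]] : exists Z : 'M[R]_(\rank Y, q), row_free Z /\ (Y <= Z)%MS.
  by exists (row_base Y); rewrite row_base_free eq_row_base submx_refl.
pose W := Z *m Z^T.
have Wu : W \in unitmx.
  rewrite -row_free_unit /row_free; apply/eqP/anti_leq.
  rewrite rank_leq_row /=.
  pose K := kermx W.
  have KW : K *m W = 0 := mulmx_ker W.
  have KZ : K *m Z = 0.
    apply: mxmxT_eq0; by rewrite trmx_mul mulmxA -(mulmxA K) KW mul0mx.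
  have K0 : K = 0 by apply/eqP; rewrite -(mulmx_free_eq0 _ Zfree) KZ.
  have := mxrank_ker W; rewrite -/K K0 mxrank0 => /esym/eqP.
  by rewrite subn_eq0.
pose Pi := 1%:M - Z^T *m invmx W *m Z.
have WT : W^T = W by rewrite /W trmx_mul trmxK.
exists Pi; split.
- by rewrite /Pi raddfB /= trmx1 !trmx_mul trmxK trmx_inv WT mulmxA.
- rewrite /Pi mulmxBl mulmxBr !mul1mx mulmxBr mulmx1.
  have -> : Z^T *m invmx W *m Z *m (Z^T *m invmx W *m Z) = Z^T *m invmx W *m Z.
    by rewrite -!mulmxA (mulmxA Z) -/W (mulmxA (invmx W)) mulVmx // mul1mx.
  by rewrite subrr subr0.
- rewrite -(mulmxKpV YZ); move: (Y *m pinvmx Z) => C.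
  rewrite /Pi mulmxBr mulmx1 -!mulmxA (mulmxA Z) -/W.
  by rewrite (mulmxA W) mulmxV // mul1mx subrr.
- rewrite /Pi raddfB /= mxtrace1 mxtrace_mulC mulmxA -/W mulmxV //.
  by rewrite mxtrace1.
Qed.


Lemma trTC p q (X : 'M[R]_(p,q)) (Y : 'M[R]_(p,q)) : \tr (X^T *m Y) = \tr (Y^T *m X).
Proof. by rewrite -mxtrace_tr trmx_mul trmxK. Qed.
Arguments trTC {p q}.

Lemma quad_bound p q (X : 'M[R]_(p,q)) (Jp : 'M[R]_p) (Jq : 'M[R]_q) (Pi : 'M[R]_q) :
  Jp *m Jp^T = 1%:M -> Jq *m Jq^T = 1%:M -> Pi^T = Pi -> Pi *m Pi = Pi ->
  \tr (Pi *m Jq^T *m X^T *m Jp *m X) <= \tr (X^T *m X).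
Proof.
move=> hp hq PT PP.
pose a := Jp^T *m X *m Jq *m Pi.
have aT : a^T = Pi *m Jq^T *m X^T *m Jp.
  by rewrite /a !trmx_mul trmxK PT !mulmxA.
have -> : Pi *m Jq^T *m X^T *m Jp *m X = a^T *m X by rewrite aT.
have h1 : 2 * \tr (a^T *m X) <= \tr (a^T *m a) + \tr (X^T *m X).
  have := tr_sq_ge0 (a - X).
  rewrite mulmxBr !(raddfB (@trmx _ _ _)) /= !mulmxBl !raddfB /= (trTC X a).
  lra.
pose b := X *m Jq.
have h2 : \tr (a^T *m a) = \tr (b *m Pi *m b^T).
  rewrite aT /a /b !mulmxA -(mulmxA _ Jp) hp mulmx1 trmx_mul.
  rewrite mxtrace_mulC !mulmxA PP.
  rewrite -(mulmxA (Pi *m Jq^T *m X^T)) mxtrace_mulC.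
  by rewrite -!mulmxA.
have h3 : \tr (X^T *m X) = \tr (b *m b^T).
  by rewrite /b trmx_mul mulmxA -(mulmxA X) hq mulmx1 mxtrace_mulC.
pose c := (1%:M - Pi) *m b^T.
have h4 : \tr (c^T *m c) = \tr (b *m b^T) - \tr (b *m Pi *m b^T).
  have PP' : (1%:M - Pi) *m (1%:M - Pi) = 1%:M - Pi.
    by rewrite mulmxBl mulmxBr !mul1mx mulmxBr mulmx1 PP subrr subr0.
  rewrite /c trmx_mul trmxK raddfB /= trmx1 PT mulmxA -(mulmxA b (1%:M - Pi)) PP'.
  by rewrite mulmxBr mulmx1 mulmxBl raddfB.
have := tr_sq_ge0 c.
lra.
Qed.

Definition blk n (g : 'rV[R]_n) : 'M[R]_(n+n) := block_mx (diag_mx g) 0 0 (diag_mx g).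

Definition wgt n k (V : 'M[R]_(n+n,k)) (i : 'I_n) : R :=
  \sum_a (usubmx V i a ^+ 2 + dsubmx V i a ^+ 2).

Lemma tr_diag n k (U : 'M[R]_(n,k)) g :
  \tr (U^T *m diag_mx g *m U) = \sum_i g 0 i * \sum_a U i a ^+ 2.
Proof.
rewrite -mulmxA mxtrace_mulC mul_diag_mx /mxtrace; apply: eq_bigr => i _.
rewrite !mxE mulr_sumr; apply: eq_bigr => a _; rewrite !mxE; by rewrite expr2 mulrA.
Qed.

Lemma tr_blk n k (V : 'M[R]_(n+n,k)) g :
  \tr (V^T *m blk g *m V) = \sum_i g 0 i * wgt V i.
Proof.
rewrite -{1 2}(vsubmxK V) /blk tr_col_mx mul_row_block !mulmx0 addr0 add0r.
rewrite mul_row_col mxtraceD !tr_diag -big_split /=; apply: eq_bigr => i _.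
by rewrite -mulrDr /wgt big_split.
Qed.

Lemma blk_sym n (g : 'rV[R]_n) : (blk g)^T = blk g.
Proof. by rewrite /blk tr_block_mx !trmx0 tr_diag_mx. Qed.

Lemma JT n : (Jmx R n)^T = - Jmx R n.
Proof.
by rewrite /Jmx tr_block_mx !trmx0 trmx1 raddfN /= trmx1 opp_block_mx !oppr0 opprK.
Qed.

Lemma JJT n : Jmx R n *m (Jmx R n)^T = 1%:M.
Proof.
rewrite JT mulmxN /Jmx mulmx_block !mulmx0 !mul0mx !mulNmx !mulmxN !mulmx1 !addr0 !add0r.
by rewrite opp_block_mx !opprK !oppr0 -scalar_mx_block.
Qed.

Lemma JTJ n : (Jmx R n)^T *m Jmx R n = 1%:M.
Proof. by apply: mulmx1C; exact: JJT. Qed.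

Lemma blk_J n (g : 'rV[R]_n) : blk g *m Jmx R n = Jmx R n *m blk g.
Proof.
rewrite /blk /Jmx !mulmx_block !mulmx0 !mul0mx !mulNmx !mulmxN !mulmx1 !mul1mx !addr0 !add0r.
by [].
Qed.

Definition sel t n : 'M[R]_(t,n) := \matrix_(a, i) ((a : nat) == i)%:R.
Definition ft n t : 'rV[R]_n := \row_(i < n) ((i < t)%N)%:R.
Definition gt n t : 'rV[R]_n := \row_(i < n) ((t <= i)%N)%:R.

Lemma selTsel t n : (sel t n)^T *m sel t n = diag_mx (ft n t).
Proof.
apply/matrixP => i j; rewrite !mxE.
case: (ltnP i t) => hi.
  rewrite (bigD1 (Ordinal hi)) //= big1 => [|a ha].
    by rewrite !mxE /= eqxx mul1r addr0.
  rewrite !mxE; suff -> : (a == i :> nat) = false by rewrite mul0r.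
  apply/negbTE; apply: contra ha => /eqP h; apply/eqP/val_inj => /=; by [].
rewrite big1 => [|a _]; first by rewrite mul0rn.
rewrite !mxE; suff -> : (a == i :> nat) = false by rewrite mul0r.
apply/negbTE; apply/eqP => h; move: (ltn_ord a); rewrite h; lia.
Qed.

Lemma selselT k n : (k <= n)%N -> sel k n *m (sel k n)^T = 1%:M.
Proof.
move=> kn; apply/matrixP => a b; rewrite !mxE.
have an : (a < n)%N by apply: leq_trans (ltn_ord a) kn.
rewrite (bigD1 (Ordinal an)) //= big1 => [|i hi].
  rewrite !mxE /= eqxx mul1r addr0; by rewrite eq_sym.
rewrite !mxE; suff -> : (a == i :> nat) = false by rewrite mul0r.
apply/negbTE; apply: contra hi => /eqP h; apply/eqP/val_inj => /=; by [].
Qed.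

Lemma blk_rank n t k (V : 'M[R]_(n+n,k)) : (\rank (blk (ft n t) *m V) <= t + t)%N.
Proof.
pose Q : 'M[R]_(t+t, n+n) := block_mx (sel t n) 0 0 (sel t n).
have -> : blk (ft n t) = Q^T *m Q.
  rewrite /Q tr_block_mx !trmx0 mulmx_block !mulmx0 !mul0mx !addr0 !add0r.
  by rewrite selTsel.
rewrite -mulmxA; apply: leq_trans (mxrankM_maxr _ _) _; exact: rank_leq_row.
Qed.

Lemma diag_fg n t : diag_mx (ft n t) + diag_mx (gt n t) = 1%:M.
Proof.
apply/matrixP => i j; rewrite !mxE -mulrnDl.
by case: (ltnP i t) => _; rewrite ?addr0 ?add0r.
Qed.

Lemma blk_fg n t : blk (ft n t) + blk (gt n t) = 1%:M.
Proof. by rewrite /blk add_block_mx !addr0 diag_fg -scalar_mx_block. Qed.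

Lemma blk_ff n t : blk (ft n t) *m blk (ft n t) = blk (ft n t).
Proof.
rewrite /blk mulmx_block !mulmx0 !mul0mx !addr0 !add0r mulmx_diag.
suff -> : \row_j (ft n t 0 j * ft n t 0 j) = ft n t by [].
by apply/rowP => j; rewrite !mxE; case: (j < t)%N; rewrite ?mulr1 ?mulr0.
Qed.


Lemma tail_bound n k t (V : 'M[R]_(n+n, k+k)) :
  V^T *m Jmx R n *m V = Jmx R k ->
  (k+k)%:R - (t+t)%:R <= \tr (V^T *m blk (gt n t) *m V) /\
  0 <= \tr (V^T *m blk (gt n t) *m V).
Proof.
move=> hV.
have hG : blk (gt n t) = 1%:M - blk (ft n t) by rewrite -(blk_fg n t) addrAC subrr add0r.
have FT : (blk (ft n t))^T = blk (ft n t) := blk_sym _.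
have FF : blk (ft n t) *m blk (ft n t) = blk (ft n t) := blk_ff n t.
have FJ : blk (ft n t) *m Jmx R n = Jmx R n *m blk (ft n t) := blk_J _.
have rk := blk_rank t V.
move: hG FT FF FJ rk; set F := blk (ft n t); set G := blk (gt n t) => hG FT FF FJ rk.
have GT : G^T = G by rewrite hG raddfB /= trmx1 FT.
have GG : G *m G = G by rewrite hG mulmxBl mulmxBr !mul1mx mulmxBr mulmx1 FF subrr subr0.
have FG : F *m G = 0 by rewrite hG mulmxBr mulmx1 FF subrr.
have GF : G *m F = 0 by rewrite hG mulmxBl mul1mx FF subrr.
have GJ : G *m Jmx R n = Jmx R n *m G by rewrite hG mulmxBl mulmxBr mul1mx mulmx1 FJ.
move: rk; set Y := F *m V => rk; set X := G *m V.
have VYX : V = Y + X by rewrite /Y /X -mulmxDl hG addrC subrK mul1mx.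
have c1 : Y^T *m Jmx R n *m X = 0.
  rewrite /Y /X trmx_mul FT -!mulmxA (mulmxA F) FJ -mulmxA (mulmxA F G) FG.
  by rewrite mul0mx !mulmx0.
have c2 : X^T *m Jmx R n *m Y = 0.
  rewrite /Y /X trmx_mul GT -!mulmxA (mulmxA G) GJ -mulmxA (mulmxA G F) GF.
  by rewrite mul0mx !mulmx0.
have spl : V^T *m Jmx R n *m V = Y^T *m Jmx R n *m Y + X^T *m Jmx R n *m X.
  rewrite {1 2}VYX (raddfD (@trmx _ _ _)) /= !mulmxDl !mulmxDr c1 c2 addr0 add0r.
  by rewrite !mulmxA.
have [Pi [PT PP YP trP]] := proj_ex Y.
have E1 : \tr Pi = \tr (Pi *m (Jmx R k)^T *m Y^T *m Jmx R n *m Y)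
                 + \tr (Pi *m (Jmx R k)^T *m X^T *m Jmx R n *m X).
  rewrite -[in LHS](mulmx1 Pi) -(JTJ k) mulmxA -hV spl mulmxDr mxtraceD !mulmxA.
  by [].
have E2 : \tr (Pi *m (Jmx R k)^T *m Y^T *m Jmx R n *m Y) = 0.
  by rewrite mxtrace_mulC !mulmxA YP !mul0mx mxtrace0.
have E3 := quad_bound X (JJT n) (JJT k) PT PP.
have E4 : \tr (X^T *m X) = \tr (V^T *m G *m V).
  by rewrite /X trmx_mul GT mulmxA -(mulmxA _ G G) GG.
have E5 : (\rank Y)%:R <= (t + t)%:R :> R by rewrite ler_nat.
have E6 := tr_sq_ge0 X.
split; lra.
Qed.


Lemma abel N (d e : nat -> R) :
  (forall i, 0 <= d i) -> (forall i, (i.+1 < N)%N -> d i <= d i.+1) ->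
  (forall t, (t <= N)%N -> 0 <= \sum_(t <= i < N) e i) ->
  0 <= \sum_(0 <= i < N) d i * e i.
Proof.
move=> d0 dm et.
have key : forall m t, (t + m = N)%N ->
    d t * \sum_(t <= i < N) e i <= \sum_(t <= i < N) d i * e i.
  elim=> [|m IH] t htm.
    rewrite addn0 in htm; by rewrite htm !big_geq // mulr0.
  have tN : (t < N)%N by lia.
  rewrite (big_ltn tN) (big_ltn tN) mulrDr lerD2l.
  have h1 : (t.+1 + m)%N = N by lia.
  have := IH t.+1 h1.
  suff : d t * \sum_(t.+1 <= i < N) e i <= d t.+1 * \sum_(t.+1 <= i < N) e i.
    exact: le_trans.
  have := et t.+1 tN.
  case: (ltnP t.+1 N) => h.
    move=> h0; apply: ler_wpM2r => //; exact: dm.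
  move=> _; by rewrite big_geq // !mulr0.
have := key N 0%N (add0n N); have := et 0%N (leq0n N); have := d0 0%N.
move=> h1 h2 h3; apply: le_trans h3; exact: mulr_ge0.
Qed.
Lemma count_lt t k N : (\sum_(t <= i < N) (i < k)%N = minn k N - t)%N.
Proof.
elim: N => [|N IH]; first by rewrite big_geq // minn0.
case: (leqP t N) => tN.
  rewrite big_nat_recr //= IH.
  case: (ltnP N k) => hk /=; lia.
rewrite big_geq //; lia.
Qed.
End Aux.

Lemma core (R : realType) n k (V : 'M[R]_(n.+1 + n.+1, k+k)) (d : 'rV[R]_n.+1) :
  (k <= n.+1)%N -> V^T *m Jmx R n.+1 *m V = Jmx R k ->
  (forall i, 0 <= d 0 i) -> (forall i j : 'I_n.+1, (i <= j)%N -> d 0 i <= d 0 j) ->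
  2 * \sum_(i < n.+1 | (i < k)%N) d 0 i <= \tr (V^T *m blk d *m V).
Proof.
move=> kN hV d0 dm.
pose D j := d 0 (inord j). pose w j := wgt V (inord j).
have conv : forall F : 'I_n.+1 -> R, \sum_(i < n.+1) F i = \sum_(0 <= j < n.+1) F (inord j).
  by move=> F; rewrite big_mkord; apply: eq_bigr => i _; rewrite inord_val.
rewrite tr_blk conv.
have Lk : \sum_(i < n.+1 | (i < k)%N) d 0 i = \sum_(0 <= j < n.+1) (j < k)%:R * D j.
  rewrite big_mkcond conv; apply: eq_big_nat => j /andP[_ hj].
  by rewrite /D inordK //; case: (j < k)%N; rewrite ?mul1r ?mul0r.
rewrite Lk.
have h0 : forall j, 0 <= D j by move=> j; exact: d0.
have hm : forall j, (j.+1 < n.+1)%N -> D j <= D j.+1.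
  move=> j hj; apply: dm; rewrite !inordK //; lia.
have ht : forall t, (t <= n.+1)%N ->
    0 <= \sum_(t <= j < n.+1) (w j - 2 * (j < k)%:R).
  move=> t htN; rewrite sumrB -mulr_sumr -natr_sum count_lt (minn_idPl kN).
  have [T1 T2] := tail_bound t hV.
  rewrite tr_blk conv in T1 T2.
  have S : \sum_(0 <= j < n.+1) gt R n.+1 t 0 (inord j) * wgt V (inord j)
           = \sum_(t <= j < n.+1) w j.
    rewrite (big_cat_nat (leq0n t) htN) /= big_nat_cond big1 ?add0r.
      apply: eq_big_nat => j /andP[tj jN]; by rewrite mxE inordK // tj mul1r.
    move=> j /andP[/andP[_ jt] _].
    by rewrite mxE inordK ?(leq_trans jt) // leqNgt jt mul0r.
  rewrite S in T1 T2.
  case: (leqP t k) => tk.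
    rewrite natrB // ; rewrite !natrD in T1; lra.
  have -> : (k - t)%N = 0%N by lia.
  rewrite mulr0 subr0; exact: T2.
have := abel h0 hm ht.
have -> : \sum_(0 <= j < n.+1) D j * (w j - 2 * (j < k)%:R) =
   \sum_(0 <= j < n.+1) d 0 (inord j) * wgt V (inord j)
   - 2 * \sum_(0 <= j < n.+1) (j < k)%:R * D j.
  rewrite mulr_sumr -sumrB; apply: eq_bigr => j _; rewrite /w /D; ring.
lra.
Qed.

Lemma lower (R : realType) n k (B : 'M[R]_(n.+1 + n.+1)) dB (W : 'M[R]_(n.+1 + n.+1, k + k)) :
  (k <= n.+1)%N -> symp_eigs B dB -> W^T *m Jmx R n.+1 *m W = Jmx R k ->
  2 * \sum_(i < n.+1 | (i < k)%N) dB 0 i <= \tr (W^T *m B *m W).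
Proof.
move=> kN [d0 [dm [M sM hM]]] hW.
have [N [NM MN]] : exists N, N *m M = 1%:M /\ M *m N = 1%:M.
  exists ((Jmx R n.+1)^T *m M^T *m Jmx R n.+1).
  have h : (Jmx R n.+1)^T *m M^T *m Jmx R n.+1 *m M = 1%:M.
    by rewrite -mulmxA -mulmxA (mulmxA M^T) sM JTJ.
  split => //; exact: mulmx1C.
have NJN : N^T *m Jmx R n.+1 *m N = Jmx R n.+1.
  rewrite -[X in N^T *m X *m N]sM !mulmxA -trmx_mul MN trmx1 mul1mx.
  by rewrite -mulmxA MN mulmx1.
pose V := N *m W.
have WV : W = M *m V by rewrite /V mulmxA MN mul1mx.
have hV : V^T *m Jmx R n.+1 *m V = Jmx R k.
  by rewrite /V trmx_mul mulmxA -(mulmxA W^T N^T) -(mulmxA W^T (N^T *m _) N) NJN.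
have -> : \tr (W^T *m B *m W) = \tr (V^T *m blk dB *m V).
  by rewrite WV trmx_mul /blk -hM !mulmxA.
exact: core.
Qed.

Lemma upper (R : realType) n k (A : 'M[R]_(n.+1 + n.+1)) dA :
  (k <= n.+1)%N -> symp_eigs A dA ->
  exists V : 'M[R]_(n.+1 + n.+1, k + k), V^T *m Jmx R n.+1 *m V = Jmx R k /\
    \tr (V^T *m A *m V) = 2 * \sum_(i < n.+1 | (i < k)%N) dA 0 i.
Proof.
move=> kN [d0 [dm [M sM hM]]].
pose S := sel R k n.+1.
pose E : 'M[R]_(n.+1 + n.+1, k + k) := block_mx S^T 0 0 S^T.
have ET : E^T = block_mx S 0 0 S by rewrite /E tr_block_mx !trmx0 trmxK.
exists (M *m E); split.
  rewrite trmx_mul -!mulmxA (mulmxA M^T) (mulmxA (M^T *m _)) sM ET /Jmx.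
  rewrite !mulmx_block !mulmx0 !mul0mx !mul1mx !mulNmx !addr0 !add0r ?mulmxN.
  by rewrite !mulmx0 !mul1mx (selselT R kN).
rewrite trmx_mul -!mulmxA (mulmxA M^T) (mulmxA (M^T *m _)) hM ET.
rewrite !mulmx_block !mulmx0 !mul0mx !addr0 !add0r mxtrace_block.
rewrite mxtrace_mulC -mulmxA selTsel mulmx_diag mxtrace_diag.
rewrite big_mkcond /=.
have -> : \sum_(i < n.+1) (\row_j (dA 0 j * ft R n.+1 k 0 j)) 0 i =
    \sum_(i < n.+1) (if (i < k)%N then dA 0 i else 0).
  by apply: eq_bigr => i _; rewrite !mxE; case: (i < k)%N; rewrite ?mulr1 ?mulr0.
rewrite -big_mkcond; lra.
Qed.

Lemma sum_sort (R : realType) n (d : 'rV[R]_n) k :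
  (forall i j : 'I_n, (i <= j)%N -> d 0 i <= d 0 j) -> (k <= n)%N ->
  \sum_(j < k) nth 0 (sort_up d) j = \sum_(i < n | (i < k)%N) d 0 i.
Proof.
move=> dm kn.
have srt : sorted <=%R [seq d 0 i | i <- enum 'I_n].
  rewrite sorted_map.
  have s0 : sorted (relpre val leq) (enum 'I_n).
    by rewrite -sorted_map val_enum_ord iota_sorted.
  apply: sub_sorted s0 => i j /= h; exact: dm.
rewrite /sort_up (sorted_sort le_trans srt).
rewrite (big_ord_widen n (fun j => nth 0 [seq d 0 i | i <- enum 'I_n] j) kn).
by apply: eq_bigr => i _; rewrite (nth_map i) ?size_enum_ord // nth_ord_enum.
Qed.

Theorem theorem3p4 (R : realType) (n : nat) (A B : 'M[R]_(n + n)) :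
  psd A -> psd B -> ker_symplectic A -> ker_symplectic B ->
  (exists m : nat, (1 <= m)%N /\
     exists (M : 'I_m -> 'M[R]_(n + n)) (lam : 'I_m -> R),
       [/\ forall i, symplectic (M i),
           forall i, 0 < lam i,
           \sum_(i < m) lam i = 1 &
           A = \sum_(i < m) lam i *: ((M i)^T *m B *m M i)]) ->
  forall dA dB : 'rV[R]_n, symp_eigs A dA -> symp_eigs B dB ->
    weak_supmaj dA dB.
Proof.
case: n A B => [|n] A B _ _ _ _ [m [_ [M [lam [sM lam0 lam1 hA]]]]] dA dB eA eB k /andP[k1 kn].
  by move: (leq_trans k1 kn).
have eA' := eA; have eB' := eB.
case: eA' => [_ [dmA _]]; case: eB' => [_ [dmB _]].
rewrite (sum_sort dmA kn) (sum_sort dmB kn).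
have [V [hV trV]] := upper kn eA.
have key : 2 * \sum_(i < n.+1 | (i < k)%N) dB 0 i <= \tr (V^T *m A *m V).
  rewrite hA mulmx_sumr mulmx_suml raddf_sum /=.
  have -> : \sum_(i < m) \tr (V^T *m (lam i *: ((M i)^T *m B *m M i)) *m V)
      = \sum_(i < m) lam i * \tr ((M i *m V)^T *m B *m (M i *m V)).
    apply: eq_bigr => i _.
    by rewrite -scalemxAr -scalemxAl mxtraceZ trmx_mul !mulmxA.
  have -> : 2 * \sum_(i < n.+1 | (i < k)%N) dB 0 i =
      \sum_(i < m) lam i * (2 * \sum_(i < n.+1 | (i < k)%N) dB 0 i).
    by rewrite -mulr_suml lam1 mul1r.
  apply: ler_sum => i _.
  apply: ler_wpM2l; first exact: ltW.
  apply: lower kn eB _.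
  rewrite trmx_mul -!mulmxA (mulmxA (M i)^T) (mulmxA ((M i)^T *m _)) (sM i).
  by rewrite !mulmxA.
rewrite trV in key; lra.
Qed.
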